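(* For all $n\ge 1$, $|F_n(321,3142)|=2^{n-1}$.
   Context: A permutation $\pi$ avoids a classical pattern $p\in S_k$ if no subsequence of $\pi$ of length $k$ is order-isomorphic to $p$. A Fishburn permutation is a permutation $\pi=\pi_1\cdots\pi_n$ of $[n]$ for which there are no indices $i<j$ with $\pi_j<\pi_i<\pi_{i+1}$ and $\pi_i=\pi_j+1$. $F_n(\sigma_1,\dots,\sigma_k)$ denotes the set of Fishburn permutations of length $n$ avoiding each of the classical patterns $\sigma_1,\dots,\sigma_k$. *)

(* Defs.v *)
From mathcomp Require Import all_boot.
From mathcomp Require Import fingroup perm.
Set Implicit Arguments. Unset Strict Implicit. Unset Printing Implicit Defensive.

(* A permutation pi of [n] is represented as pi : {perm 'I_n}; position i
   (0-based) holds value pi i (0-based).  Shifting by 1 does not affect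
   order-isomorphism or the Fishburn condition. *)

Definition contains (n : nat) (pi : {perm 'I_n}) (p : seq nat) : bool :=
  [exists f : {ffun 'I_(size p) -> 'I_n},
     [forall a : 'I_(size p), forall b : 'I_(size p),
        ((a < b) ==> (f a < f b)) &&
        ((pi (f a) < pi (f b)) == (nth 0 p a < nth 0 p b))]].

Definition avoids (n : nat) (pi : {perm 'I_n}) (p : seq nat) : bool :=
  ~~ contains pi p.

Definition fishburn (n : nat) (pi : {perm 'I_n}) : bool :=
  ~~ [exists i : 'I_n, exists i1 : 'I_n, exists j : 'I_n,
        [&& val i1 == (val i).+1, i < j, pi j < pi i, pi i < pi i1 &
            val (pi i) == (val (pi j)).+1]].

Definition F_321_3142 (n : nat) : {set {perm 'I_n}} :=
  [set pi | [&& fishburn pi, avoids pi [:: 3; 2; 1] & avoids pi [:: 3; 1; 4; 2]]].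

(* Main.v *)
Require Import Defs.
From mathcomp Require Import all_boot.
From mathcomp Require Import fingroup perm.
From mathcomp Require Import zify.

Definition Pp {n} (pi : {perm 'I_n}) : bool := [forall i : 'I_n, i <= (pi i).+1].

Lemma card_lt n k : k <= n -> #|[set v : 'I_n | v < k]| = k.
Proof.
move=> kn.
have -> : [set v : 'I_n | v < k] = (widen_ord kn) @: [set: 'I_k].
  apply/setP => v; rewrite inE; apply/idP/imsetP.
    by move=> vk; exists (Ordinal vk) => //; apply: val_inj.
  by case=> w _ ->; rewrite /= ltn_ord.
by rewrite card_imset ?cardsT ?card_ord //; by move=> a b /(congr1 val) /= e; apply: val_inj.
Qed.

Lemma card_ge n k : k <= n -> #|[set v : 'I_n | k <= v]| = n - k.
Proof.
move=> kn.
have := cardsC [set v : 'I_n | v < k].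
rewrite card_lt // card_ord.
have -> : ~: [set v : 'I_n | v < k] = [set v : 'I_n | k <= v].
  by apply/setP => v; rewrite !inE -leqNgt.
lia.
Qed.

Lemma decomp n (pi : {perm 'I_n.+1}) i : exists s, pi = lift_perm i (pi i) s.
Proof.
pose f k := odflt k (unlift (pi i) (pi (lift i k))).
have hf : forall k, lift (pi i) (f k) = pi (lift i k).
  move=> k; rewrite /f; case: unliftP => [k' -> // | e].
  by move/perm_inj: e => e; have := neq_lift i k; rewrite e eqxx.
have finj : injective f.
  move=> k1 k2 e; have := hf k1; rewrite e hf => /perm_inj /lift_inj.
  by [].
exists (perm finj); apply/permP => x; case: (unliftP i x) => [k ->|->].
  by rewrite lift_perm_lift permE hf.
by rewrite lift_perm_id.
Qed.

Lemma Pp_lift n (s : {perm 'I_n.+1}) (j : 'I_n.+2) :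
  Pp (lift_perm ord_max j s) = (n <= j) && Pp s.
Proof.
apply/idP/idP.
  move/forallP => H.
  have jn : n <= j by have := H ord_max; rewrite lift_perm_id /=; lia.
  rewrite jn /=.
  apply/forallP => k; have := H (lift ord_max k).
  rewrite lift_perm_lift /= /bump /=.
  have := ltn_ord k; have := ltn_ord (s k); case: leqP => _; case: leqP; lia.
case/andP => jn /forallP H; apply/forallP => x.
case: (unliftP ord_max x) => [k ->|->].
  rewrite lift_perm_lift /= /bump /=.
  have := H k; have := ltn_ord k; have := ltn_ord (s k); case: leqP => _; case: leqP; lia.
by rewrite lift_perm_id /=; lia.
Qed.

Lemma cardP m : #|[set pi : {perm 'I_m.+1} | Pp pi]| = 2 ^ m.
Proof.
elim: m => [|m IH].
  have -> : [set pi : {perm 'I_1} | Pp pi] = setT.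
    apply/setP => pi; rewrite !inE; apply/forallP => i.
    by case: i => [[|i] Hi].
  by rewrite cardsT card_Sn.
pose g (p : 'I_m.+2 * {perm 'I_m.+1}) := lift_perm ord_max p.1 p.2.
have ginj : injective g.
  move=> [j s] [j' s'] /= e.
  have ej : j = j'.
    by have := f_equal (fun q : {perm _} => q ord_max) e; rewrite /g /= !lift_perm_id.
  subst j'; congr (_, _); apply/permP => k.
  have := f_equal (fun q : {perm _} => q (lift ord_max k)) e.
  by rewrite /g /= !lift_perm_lift => /lift_inj.
have -> : [set pi : {perm 'I_m.+2} | Pp pi] =
   g @: setX [set j : 'I_m.+2 | m <= j] [set s : {perm 'I_m.+1} | Pp s].
  apply/setP => pi; rewrite inE; apply/idP/imsetP.
    have [s ->] := @decomp _ pi ord_max.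
    rewrite Pp_lift => /andP [h1 h2].
    by exists (pi ord_max, s); rewrite ?inE ?h1 ?h2.
  case=> [[j s]]; rewrite !inE /= => /andP [h1 h2] ->.
  by rewrite /g Pp_lift h1 h2.
rewrite card_imset // cardsX IH card_ge // ?expnS; lia.
Qed.
Lemma two_big n (pi : {perm 'I_n}) (x y p : 'I_n) : Pp pi -> x != y ->
  x < p -> y < p -> pi p < pi x -> pi p < pi y -> False.
Proof.
move=> /forallP HP xy xp yp hx hy.
pose S := [set k : 'I_n | p <= k].
pose A := x |: (y |: S).
have cA : #|A| = (n - p).+2.
  rewrite /A !cardsU1 card_ge ?(ltnW (ltn_ord p)) // !inE (negbTE xy).
  rewrite leqNgt xp leqNgt yp /=; lia.
have sub : pi @: A \subset [set v : 'I_n | p.-1 <= v].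
  apply/subsetP => v /imsetP [k kA ->]; rewrite inE.
  move: kA; rewrite !inE => /orP [/eqP -> | /orP [/eqP -> | kS]].
  - have := HP p; lia.
  - have := HP p; lia.
  - have := HP k; lia.
have := subset_leq_card sub.
rewrite card_imset; last exact: perm_inj.
rewrite cA card_ge; last by have := ltn_ord p; lia.
have := ltn_ord p; lia.
Qed.
Lemma mk3 n (pi : {perm 'I_n}) (a b c : 'I_n) :
  a < b -> b < c -> pi b < pi a -> pi c < pi b -> contains pi [:: 3; 2; 1].
Proof.
move=> *; apply/existsP; exists [ffun k : 'I_3 => nth a [:: a; b; c] k].
apply/forallP => k; apply/forallP => l; rewrite !ffunE.
by case: k => [[|[|[|k]]] Hk] //; case: l => [[|[|[|l]]] Hl] //=; lia.
Qed.

Lemma mk4 n (pi : {perm 'I_n}) (a b c d : 'I_n) :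
  a < b -> b < c -> c < d -> pi b < pi d -> pi d < pi a -> pi a < pi c ->
  contains pi [:: 3; 1; 4; 2].
Proof.
move=> *; apply/existsP; exists [ffun k : 'I_4 => nth a [:: a; b; c; d] k].
apply/forallP => k; apply/forallP => l; rewrite !ffunE.
by case: k => [[|[|[|[|k]]]] Hk] //; case: l => [[|[|[|[|l]]]] Hl] //=; lia.
Qed.

Lemma from_false n (pi : {perm 'I_n}) (x y : 'I_n) :
  x < y -> (pi x < pi y) = false -> pi y < pi x.
Proof.
move=> xy /negbT; rewrite -leqNgt leq_eqVlt => /orP [/eqP e|//].
by move/val_inj/perm_inj: e => e; move: xy; rewrite e ltnn.
Qed.

Lemma get3 n (pi : {perm 'I_n}) : contains pi [:: 3; 2; 1] ->
  exists a b c : 'I_n, [/\ a < b, b < c, pi b < pi a & pi c < pi b].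
Proof.
case/existsP => f /forallP H.
have H' := fun a b => forallP (H a) b.
have := H' (@Ordinal 3 0 isT) (@Ordinal 3 1 isT).
have := H' (@Ordinal 3 1 isT) (@Ordinal 3 2 isT).
move=> /andP [h1 /eqP h1'] /andP [h2 /eqP h2'].
exists (f (@Ordinal 3 0 isT)), (f (@Ordinal 3 1 isT)), (f (@Ordinal 3 2 isT)).
have h1t := implyP h1 isT; have h2t := implyP h2 isT.
by split => //; apply: from_false.
Qed.

Lemma get4 n (pi : {perm 'I_n}) : contains pi [:: 3; 1; 4; 2] ->
  exists a c d : 'I_n, [/\ a < c, c < d, pi d < pi a & pi d < pi c].
Proof.
case/existsP => f /forallP H.
have H' := fun a b => forallP (H a) b.
have := H' (@Ordinal 4 0 isT) (@Ordinal 4 2 isT).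
have := H' (@Ordinal 4 2 isT) (@Ordinal 4 3 isT).
have := H' (@Ordinal 4 0 isT) (@Ordinal 4 3 isT).
move=> /andP [h1 /eqP h1'] /andP [h2 /eqP h2'] /andP [h3 /eqP h3'].
have h1t := implyP h1 isT; have h2t := implyP h2 isT; have h3t := implyP h3 isT.
exists (f (@Ordinal 4 0 isT)), (f (@Ordinal 4 2 isT)), (f (@Ordinal 4 3 isT)).
by split => //; apply: from_false.
Qed.

Lemma P_F n (pi : {perm 'I_n}) : Pp pi ->
  [&& fishburn pi, avoids pi [:: 3; 2; 1] & avoids pi [:: 3; 1; 4; 2]].
Proof.
move=> HP; apply/and3P; split.
- apply/existsP => [[i /existsP [i1 /existsP [j /and5P [h1 h2 h3 h4 h5]]]]].
  move: h1 h5 => /= /eqP h1 /eqP h5.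
  case: (eqVneq (nat_of_ord i1) (nat_of_ord j)) => e.
    by move/val_inj: e => e; subst; lia.
  apply: (@two_big _ pi i i1 j HP); try lia.
  by apply/negP => /eqP ei; move: h1; rewrite -ei; lia.
- rewrite /avoids; apply/negP => Hc; have [a [b [c [h1 h2 h3 h4]]]] := get3 _ _ Hc.
  apply: (@two_big _ pi a b c HP) => //; try lia.
  by apply/negP => /eqP e; move: h1; rewrite e; lia.
- rewrite /avoids; apply/negP => Hc; have [a [c [d [h1 h2 h3 h4]]]] := get4 _ _ Hc.
  apply: (@two_big _ pi a c d HP) => //; try lia.
  by apply/negP => /eqP e; move: h1; rewrite e; lia.
Qed.
Lemma pinj n (pi : {perm 'I_n}) (x y : 'I_n) :
  nat_of_ord (pi x) = nat_of_ord (pi y) -> x = y.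
Proof. by move/val_inj/perm_inj. Qed.

Lemma F_P n (pi : {perm 'I_n}) : fishburn pi -> avoids pi [:: 3; 2; 1] ->
  avoids pi [:: 3; 1; 4; 2] -> Pp pi.
Proof.
move=> Hf H3 H4; apply/forallP => i; rewrite leqNgt; apply/negP => bad.
pose Z := [set x : 'I_n | (x < i) && (pi i < pi x)].
have cZ : 1 < #|Z|.
  pose Y := [set x : 'I_n | (x < i) && (pi x < pi i)].
  have cY : #|Y| <= pi i.
    have sub : pi @: Y \subset [set v : 'I_n | v < pi i].
      by apply/subsetP => v /imsetP [k]; rewrite !inE => /andP [_ h] ->.
    have := subset_leq_card sub; rewrite card_lt; last exact: ltnW (ltn_ord (pi i)).
    by rewrite card_imset //; exact: perm_inj.
  have sub : [set x : 'I_n | x < i] \subset Y :|: Z.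
    apply/subsetP => x; rewrite !inE => xi; rewrite xi /=.
    case: (ltngtP (pi x) (pi i)) => // /pinj e.
    by subst; rewrite ltnn in xi.
  have := subset_leq_card sub; rewrite card_lt; last exact: ltnW (ltn_ord i).
  rewrite cardsU; lia.
have [z1 z1Z] : exists z, z \in Z.
  by case/card_gt1P: cZ => [x [y [xZ _ _]]]; exists x.
have [a1 a1Z a1min] := @arg_minnP _ z1 (fun x => x \in Z) (fun x => nat_of_ord (pi x)) z1Z.
have [a2 [a2Z a2ne]] : exists a2, a2 \in Z /\ a2 != a1.
  case/card_gt1P: cZ => [x [y [xZ yZ xy]]].
  case: (eqVneq x a1) => e; last by exists x.
  by exists y; split => //; rewrite -e eq_sym.
have a12v : pi a1 < pi a2.
  have := a1min a2 a2Z; rewrite leq_eqVlt => /orP [/eqP /pinj e|//].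
  by rewrite e eqxx in a2ne.
have a1Z' := a1Z; have a2Z' := a2Z.
move: a1Z' a2Z'; rewrite !inE => /andP [a1i a1v] /andP [a2i a2v].
have a12 : a1 < a2.
  case: (ltngtP a1 a2) => // h.
    by move/negP: H3; case; apply: (@mk3 _ pi a2 a1 i).
  by move/val_inj: h => h; rewrite h eqxx in a2ne.
have qlt : (pi a1).-1 < n by have := ltn_ord (pi a1); lia.
pose q := (pi^-1)%g (Ordinal qlt).
have hq : nat_of_ord (pi q) = (pi a1).-1 by rewrite /q permKV.
have iq : i <= q.
  rewrite leqNgt; apply/negP => qi.
  case: (ltngtP (pi q) (pi i)) => h.
  - lia.
  - have qZ : q \in Z by rewrite inE qi h.
    have := a1min q qZ; lia.
  - by move/pinj: h => h; rewrite h ltnn in qi.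
have blt : a1.+1 < n by have := ltn_ord a2; lia.
pose b : 'I_n := Ordinal blt.
have vb : nat_of_ord b = a1.+1 by [].
case: (ltngtP (pi b) (pi i)) => hb.
- have ba2 : b < a2.
    case: (ltngtP b a2) => // h; first lia.
    by move/val_inj: h => h; rewrite h in hb; lia.
  move/negP: H4; case; apply: (@mk4 _ pi a1 b a2 q); lia.
- have bZ : b \in Z by rewrite inE hb andbT; lia.
  have ab : pi a1 < pi b.
    have := a1min b bZ; rewrite leq_eqVlt => /orP [/eqP /pinj e|//].
    by move: vb; rewrite -e; lia.
  move/negP: Hf; case; apply/existsP; exists a1; apply/existsP; exists b.
  apply/existsP; exists q; apply/and5P; split => /=; lia.
- by move/pinj: hb => hb; have := ltn_ord b; move: vb; rewrite hb; lia.
Qed.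

Theorem mainTheorem5 (n : nat) : 1 <= n -> #|F_321_3142 n| = 2 ^ n.-1.
Proof.
case: n => [//|m] _ /=.
rewrite -(cardP m); apply: eq_card => pi; rewrite !inE.
apply/idP/idP.
  by case/and3P => h1 h2 h3; apply: F_P.
exact: P_F.
Qed.
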